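(* Let $\Bbbk$ be a field of characteristic $0$ and let $J$ be a special Jordan dialgebra such that the algebra $\bar J$ has a unit. Then $\bar J$ is a special Jordan algebra.
   Context: An associative dialgebra is a vector space with bilinear $\vdash,\dashv$ satisfying $(x\dashv y)\vdash z=(x\vdash y)\vdash z$, $x\dashv(y\vdash z)=x\dashv(y\dashv z)$, $(x\vdash y)\vdash z=x\vdash(y\vdash z)$, $(x\dashv y)\dashv z=x\dashv(y\dashv z)$, $(x\vdash y)\dashv z=x\vdash(y\dashv z)$; $D^{(+)}$ is $D$ with $a\vdash_+b=\tfrac12(a\vdash b+b\dashv a)$, $a\dashv_+b=\tfrac12(a\dashv b+b\vdash a)$. A special Jordan dialgebra is a subdialgebra $J$ of some $D^{(+)}$. For such $J$ (operations $\vdash_+,\dashv_+$), $[J,J]=\mathrm{span}\{a\vdash_+b-a\dashv_+b: a,b\in J\}$ is an ideal and $\bar J=J/[J,J]$ is an ordinary (Jordan) algebra. A Jordan algebra is special if it embeds into $A^{(+)}$ (product $\tfrac12(ab+ba)$) for an associative algebra $A$. *)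

(* Defs.v *)
From HB Require Import structures.
From mathcomp Require Import all_boot all_order all_algebra.
Set Implicit Arguments. Unset Strict Implicit. Unset Printing Implicit Defensive.
Import Order.TTheory GRing.Theory Num.Theory.
Local Open Scope ring_scope.

(* An associative dialgebra over F: a vector space D with two bilinear
   products dl (written |-) and dr (written -|) satisfying the five axioms. *)
Record assoc_dialgebra (F : fieldType) (D : lmodType F)
    (dl dr : D -> D -> D) : Prop := AssocDialgebra {
  dl_linl : forall (c : F) x y z, dl (c *: x + y) z = c *: dl x z + dl y z;
  dl_linr : forall (c : F) x y z, dl x (c *: y + z) = c *: dl x y + dl x z;
  dr_linl : forall (c : F) x y z, dr (c *: x + y) z = c *: dr x z + dr y z;
  dr_linr : forall (c : F) x y z, dr x (c *: y + z) = c *: dr x y + dr x z;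
  dia1 : forall x y z, dl (dr x y) z = dl (dl x y) z;
  dia2 : forall x y z, dr x (dl y z) = dr x (dr y z);
  dia3 : forall x y z, dl (dl x y) z = dl x (dl y z);
  dia4 : forall x y z, dr (dr x y) z = dr x (dr y z);
  dia5 : forall x y z, dr (dl x y) z = dl x (dr y z)
}.

Definition dlp (F : fieldType) (D : lmodType F) (dl dr : D -> D -> D) (a b : D) : D :=
  (2%:R : F)^-1 *: (dl a b + dr b a).
Definition drp (F : fieldType) (D : lmodType F) (dl dr : D -> D -> D) (a b : D) : D :=
  (2%:R : F)^-1 *: (dr a b + dl b a).

Record sub_dialgebra_plus (F : fieldType) (D : lmodType F)
    (dl dr : D -> D -> D) (J : D -> Prop) : Prop := SubDialgebraPlus {
  sub0 : J 0;
  sub_lin : forall (c : F) a b, J a -> J b -> J (c *: a + b);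
  sub_dlp : forall a b, J a -> J b -> J (dlp dl dr a b);
  sub_drp : forall a b, J a -> J b -> J (drp dl dr a b)
}.

Inductive commJ (F : fieldType) (D : lmodType F) (dl dr : D -> D -> D)
    (J : D -> Prop) : D -> Prop :=
  | commJ_gen a b : J a -> J b -> commJ dl dr J (dlp dl dr a b - drp dl dr a b)
  | commJ_0 : commJ dl dr J 0
  | commJ_lin (c : F) x y :
      commJ dl dr J x -> commJ dl dr J y -> commJ dl dr J (c *: x + y).

(* The algebra Jbar = J/[J,J] (product induced by |-_+, which agrees with
   -|_+ modulo [J,J]) has a unit: the class of some e in J. *)
Definition Jbar_has_unit (F : fieldType) (D : lmodType F) (dl dr : D -> D -> D)
    (J : D -> Prop) : Prop :=
  exists2 e, J e & forall a, J a ->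
    commJ dl dr J (dlp dl dr e a - a) /\ commJ dl dr J (dlp dl dr a e - a).

(* Jbar is a special Jordan algebra: there is an associative algebra A and an
   injective algebra homomorphism Jbar -> A^(+).  Such a homomorphism is
   represented by a map phi defined on J, linear on J, whose kernel on J is
   exactly [J,J], and which sends |-_+ to the Jordan product of A^(+). *)
Definition Jbar_special (F : fieldType) (D : lmodType F) (dl dr : D -> D -> D)
    (J : D -> Prop) : Prop :=
  exists (A : algType F) (phi : D -> A),
    [/\ forall (c : F) a b, J a -> J b -> phi (c *: a + b) = c *: phi a + phi b,
        forall a, J a -> (phi a = 0 <-> commJ dl dr J a) &
        forall a b, J a -> J b ->
          phi (dlp dl dr a b) = (2%:R : F)^-1 *: (phi a * phi b + phi b * phi a)].

(* Main.v *)
From HB Require Import structures.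
From mathcomp Require Import all_boot all_order all_algebra.
From mathcomp Require Import boolp.
Require Import Defs.
From Stdlib Require Import ProofIrrelevance.
Set Implicit Arguments. Unset Strict Implicit. Unset Printing Implicit Defensive.
Import GRing.Theory.
Local Open Scope ring_scope.

Record lend (F : fieldType) (V : lmodType F) := LEnd {
  app :> V -> V;
  appL : forall (a : F) x y, app (a *: x + y) = a *: app x + app y }.

Lemma lend_eq (F : fieldType) (V : lmodType F) (f g : lend V) :
  (forall x, f x = g x) -> f = g.
Proof.
case: f g => f Hf [g Hg] /= E.
have efg : f = g by apply: functional_extensionality_dep.
subst g; by rewrite (proof_irrelevance _ Hf Hg).
Qed.

HB.instance Definition _ (F : fieldType) (V : lmodType F) := gen_eqMixin (lend V).
HB.instance Definition _ (F : fieldType) (V : lmodType F) := gen_choiceMixin (lend V).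

Lemma lin0 (F : fieldType) (V : lmodType F) (f : lend V) : f 0 = 0.
Proof.
have := appL f 1 0 0; rewrite scaler0 scale1r addr0 => h.
apply: (addrI (f 0)); by rewrite addr0 -h.
Qed.
Lemma linD (F : fieldType) (V : lmodType F) (f : lend V) x y : f (x + y) = f x + f y.
Proof. by have := appL f 1 x y; rewrite !scale1r. Qed.
Lemma linZ (F : fieldType) (V : lmodType F) (f : lend V) a x : f (a *: x) = a *: f x.
Proof. by have := appL f a x 0; rewrite !addr0 lin0 addr0. Qed.
Lemma linN (F : fieldType) (V : lmodType F) (f : lend V) x : f (- x) = - f x.
Proof. by rewrite -scaleN1r linZ scaleN1r. Qed.

Definition lzero (F : fieldType) (V : lmodType F) : lend V.
Proof. refine (@LEnd _ _ (fun _ => 0) _) => a x y; by rewrite scaler0 addr0. Defined.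
Definition ladd (F : fieldType) (V : lmodType F) (f g : lend V) : lend V.
Proof. refine (@LEnd _ _ (fun x => f x + g x) _) => a x y.
by rewrite !appL scalerDr addrACA. Defined.
Definition lopp (F : fieldType) (V : lmodType F) (f : lend V) : lend V.
Proof. refine (@LEnd _ _ (fun x => - f x) _) => a x y.
by rewrite !appL opprD scalerN. Defined.
Definition lone (F : fieldType) (V : lmodType F) : lend V.
Proof. by refine (@LEnd _ _ (fun x => x) _). Defined.
Definition lmul (F : fieldType) (V : lmodType F) (f g : lend V) : lend V.
Proof. refine (@LEnd _ _ (fun x => f (g x)) _) => a x y.
by rewrite !appL. Defined.
Definition lscale (F : fieldType) (V : lmodType F) (k : F) (f : lend V) : lend V.
Proof. refine (@LEnd _ _ (fun x => k *: f x) _) => a x y.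
by rewrite !appL scalerDr !scalerA mulrC. Defined.

Lemma laddA (F : fieldType) (V : lmodType F) : associative (@ladd F V).
Proof. by move=> f g h; apply: lend_eq => x /=; rewrite addrA. Qed.
Lemma laddC (F : fieldType) (V : lmodType F) : commutative (@ladd F V).
Proof. by move=> f g; apply: lend_eq => x /=; rewrite addrC. Qed.
Lemma ladd0 (F : fieldType) (V : lmodType F) : left_id (@lzero F V) (@ladd F V).
Proof. by move=> f; apply: lend_eq => x /=; rewrite add0r. Qed.
Lemma laddN (F : fieldType) (V : lmodType F) : left_inverse (@lzero F V) (@lopp F V) (@ladd F V).
Proof. by move=> f; apply: lend_eq => x /=; rewrite addNr. Qed.

HB.instance Definition _ (F : fieldType) (V : lmodType F) :=
  GRing.isZmodule.Build (lend V) (@laddA F V) (@laddC F V) (@ladd0 F V) (@laddN F V).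

Definition EndX (F : fieldType) (V : lmodType F) := lend ((V * F^o)%type).
HB.instance Definition _ (F : fieldType) (V : lmodType F) := GRing.Zmodule.on (EndX V).

Lemma lmulA (F : fieldType) (V : lmodType F) : associative (@lmul F (V * F^o)%type : EndX V -> EndX V -> EndX V).
Proof. by move=> f g h; apply: lend_eq. Qed.
Lemma lmul1 (F : fieldType) (V : lmodType F) : left_id (lone _ : EndX V) (@lmul F _).
Proof. by move=> f; apply: lend_eq. Qed.
Lemma lmulr1 (F : fieldType) (V : lmodType F) : right_id (lone _ : EndX V) (@lmul F _).
Proof. by move=> f; apply: lend_eq. Qed.
Lemma lmulDl (F : fieldType) (V : lmodType F) : left_distributive (@lmul F _ : EndX V -> EndX V -> EndX V) +%R.
Proof. by move=> f g h; apply: lend_eq. Qed.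
Lemma lmulDr (F : fieldType) (V : lmodType F) : right_distributive (@lmul F _ : EndX V -> EndX V -> EndX V) +%R.
Proof. by move=> f g h; apply: lend_eq => x /=; rewrite linD. Qed.
Lemma lone_neq0 (F : fieldType) (V : lmodType F) : (lone _ : EndX V) != 0.
Proof.
apply/eqP => /(congr1 (fun f : EndX V => f (0, (1 : F^o)))) /= [].
by move/eqP; rewrite oner_eq0.
Qed.

HB.instance Definition _ (F : fieldType) (V : lmodType F) :=
  GRing.Zmodule_isNzRing.Build (EndX V) (@lmulA F V) (@lmul1 F V) (@lmulr1 F V)
    (@lmulDl F V) (@lmulDr F V) (@lone_neq0 F V).

Lemma lscaleA (F : fieldType) (V : lmodType F) a b (v : EndX V) :
  lscale a (lscale b v) = lscale (a * b) v.
Proof. by apply: lend_eq => x /=; rewrite scalerA. Qed.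
Lemma lscale1 (F : fieldType) (V : lmodType F) : left_id 1 (@lscale F _ : F -> EndX V -> EndX V).
Proof. by move=> f; apply: lend_eq => x /=; rewrite scale1r. Qed.
Lemma lscaleDr (F : fieldType) (V : lmodType F) : right_distributive (@lscale F _ : F -> EndX V -> EndX V) +%R.
Proof. by move=> a f g; apply: lend_eq => x /=; rewrite scalerDr. Qed.
Lemma lscaleDl (F : fieldType) (V : lmodType F) (v : EndX V) :
  {morph (@lscale F _)^~ v : a b / a + b}.
Proof. by move=> a b; apply: lend_eq => x /=; rewrite scalerDl. Qed.

HB.instance Definition _ (F : fieldType) (V : lmodType F) :=
  GRing.Zmodule_isLmodule.Build F (EndX V) (@lscaleA F V) (@lscale1 F V) (@lscaleDr F V) (@lscaleDl F V).

Lemma lscaleAl (F : fieldType) (V : lmodType F) (a : F) (u v : EndX V) : a *: (u * v) = (a *: u) * v.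
Proof. by apply: lend_eq. Qed.
HB.instance Definition _ (F : fieldType) (V : lmodType F) :=
  GRing.Lmodule_isLalgebra.Build F (EndX V) (@lscaleAl F V).
Lemma lscaleAr (F : fieldType) (V : lmodType F) (a : F) (u v : EndX V) : a *: (u * v) = u * (a *: v).
Proof. by apply: lend_eq => x /=; rewrite linZ. Qed.
HB.instance Definition _ (F : fieldType) (V : lmodType F) :=
  GRing.Lalgebra_isAlgebra.Build F (EndX V) (@lscaleAr F V).



Lemma gl0 (F : fieldType) (U W : lmodType F) (h : U -> W) :
  (forall (c : F) x y, h (c *: x + y) = c *: h x + h y) -> h 0 = 0.
Proof.
move=> hl; have := hl 1 0 0; rewrite scaler0 scale1r addr0 => e.
apply: (addrI (h 0)); by rewrite addr0 -e.
Qed.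
Lemma glD (F : fieldType) (U W : lmodType F) (h : U -> W) :
  (forall (c : F) x y, h (c *: x + y) = c *: h x + h y) -> forall x y, h (x + y) = h x + h y.
Proof. by move=> hl x y; have := hl 1 x y; rewrite !scale1r. Qed.
Lemma glZ (F : fieldType) (U W : lmodType F) (h : U -> W) :
  (forall (c : F) x y, h (c *: x + y) = c *: h x + h y) -> forall c x, h (c *: x) = c *: h x.
Proof. by move=> hl c x; have := hl c x 0; rewrite !addr0 (gl0 hl) addr0. Qed.
Lemma glN (F : fieldType) (U W : lmodType F) (h : U -> W) :
  (forall (c : F) x y, h (c *: x + y) = c *: h x + h y) -> forall x, h (- x) = - h x.
Proof. by move=> hl x; rewrite -scaleN1r (glZ hl) scaleN1r. Qed.
Lemma glB (F : fieldType) (U W : lmodType F) (h : U -> W) :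
  (forall (c : F) x y, h (c *: x + y) = c *: h x + h y) -> forall x y, h (x - y) = h x - h y.
Proof. by move=> hl x y; rewrite (glD hl) (glN hl). Qed.

Lemma pairD (F : fieldType) (U W : lmodType F) (a c : U) (b d : W) : (a, b) + (c, d) = (a + c, b + d).
Proof. by []. Qed.
Lemma pairZ (F : fieldType) (U W : lmodType F) (k : F) (a : U) (b : W) : k *: (a, b) = (k *: a, k *: b).
Proof. by []. Qed.
Lemma pairN (F : fieldType) (U W : lmodType F) (a : U) (b : W) : - (a, b) = (- a, - b).
Proof. by []. Qed.
Lemma pair0 (F : fieldType) (U W : lmodType F) : (0 : U * W) = (0, 0).
Proof. by []. Qed.

Definition Phi (F : fieldType) (D : lmodType F) (dl dr : D -> D -> D)
  (H : assoc_dialgebra dl dr) (a : D) : EndX ((D * D)%type).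
Proof.
refine (@LEnd _ _ (fun v => ((dl a v.1.1, dr v.1.2 a), (0 : F^o))) _).
move=> c [[x1 x2] x3] [[y1 y2] y3] /=.
rewrite (dl_linr H) (dr_linl H).
by rewrite !pairZ !pairD scaler0 addr0.
Defined.

Lemma PhiL (F : fieldType) (D : lmodType F) (dl dr : D -> D -> D)
  (H : assoc_dialgebra dl dr) (c : F) (a b : D) :
  Phi H (c *: a + b) = c *: Phi H a + Phi H b.
Proof.
apply: lend_eq => -[[x y] t] /=.
by rewrite !pairZ !pairD (dl_linl H) (dr_linr H) scaler0 addr0.
Qed.

Theorem mainTheorem18 (F : fieldType) (D : lmodType F) (dl dr : D -> D -> D)
    (J : D -> Prop) :
  [pchar F] =i pred0 ->
  assoc_dialgebra dl dr ->
  sub_dialgebra_plus dl dr J ->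
  Jbar_has_unit dl dr J ->
  Jbar_special dl dr J.
Proof.
move=> _ H HJ [e Je He].
have hl1 z : forall (c : F) x y, dl (c *: x + y) z = c *: dl x z + dl y z.
  by move=> c x y; exact: (dl_linl H).
have hr2 z : forall (c : F) x y, dr z (c *: x + y) = c *: dr z x + dr z y.
  by move=> c x y; exact: (dr_linr H).
exists (EndX ((D * D)%type)), (Phi H).
split.
- by move=> c a b _ _; exact: PhiL.
- move=> a Ja; split.
  + move/(congr1 (fun f : EndX _ => f ((e, e), (0 : F^o)))) => /= [] h1 h2.
    have := (He a Ja).2; rewrite /dlp h1 h2 addr0 scaler0 add0r => hc.
    have := commJ_lin (-1) hc (commJ_0 dl dr J).
    by rewrite addr0 scaleN1r opprK.
  + elim => [x y Jx Jy | | c x y _ hx _ hy].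
    * apply: lend_eq => -[[u v] t] /=.
      rewrite pair0 /dlp /drp (glB (hl1 u)) (glB (hr2 v)) !(glZ (hl1 u)) !(glZ (hr2 v)).
      rewrite !(glD (hl1 u)) !(glD (hr2 v)) !(dia1 H) !(dia2 H).
      by rewrite !subrr.
    * apply: lend_eq => -[[u v] t] /=.
      by rewrite (gl0 (hl1 u)) (gl0 (hr2 v)).
    * by rewrite PhiL hx hy scaler0 addr0.
- move=> a b _ _.
  apply: lend_eq => -[[u v] t] /=.
  rewrite /dlp (glZ (hl1 u)) (glZ (hr2 v)) (glD (hl1 u)) (glD (hr2 v)) pairD !pairZ.
  rewrite (dia1 H) !(dia3 H) (dia2 H) !(dia4 H).
  by rewrite /= addr0 scaler0 [dr v (dr b a) + _]addrC.
Qed.
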